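(* Every finite simple graph possesses an admissible ordering of its edges.
   Context: An admissible edge ordering of a graph $G$ is a total order $\succ$ on $E(G)$ such that for any edges $\{a,b\},\{c,d\}$ with $\{a,b\}\cap\{c,d\}=\emptyset$ and $\{a,b\}\succ\{c,d\}$, either all edges incident to $a$ are larger than $\{c,d\}$ or all edges incident to $b$ are larger than $\{c,d\}$. *)

(* Defs.v *)
From mathcomp Require Import all_boot.
Set Implicit Arguments. Unset Strict Implicit. Unset Printing Implicit Defensive.

Definition simple_graph (T : finType) (adj : rel T) : Prop :=
  symmetric adj /\ irreflexive adj.

Definition is_edge (T : finType) (adj : rel T) (E : {set T}) : bool :=
  [exists x, exists y, adj x y && (E == [set x; y])].

Definition strict_total_order_on_edges (T : finType) (adj : rel T)
    (gt : rel {set T}) : Prop :=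
  (forall E, is_edge adj E -> ~~ gt E E) /\
  (forall E F H, is_edge adj E -> is_edge adj F -> is_edge adj H ->
     gt E F -> gt F H -> gt E H) /\
  (forall E F, is_edge adj E -> is_edge adj F -> E != F -> gt E F || gt F E).

Definition admissible_edge_ordering (T : finType) (adj : rel T)
    (gt : rel {set T}) : Prop :=
  strict_total_order_on_edges adj gt /\
  forall a b c d : T, adj a b -> adj c d ->
    [disjoint [set a; b] & [set c; d]] ->
    gt [set a; b] [set c; d] ->
    (forall x, adj a x -> gt [set a; x] [set c; d]) \/
    (forall x, adj b x -> gt [set b; x] [set c; d]).

(* Main.v *)
Require Import Defs.
From mathcomp Require Import all_boot.
From mathcomp Require Import zify.
Set Implicit Arguments. Unset Strict Implicit. Unset Printing Implicit Defensive.

Definition rk (T : finType) (x : T) : nat := enum_rank x.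

Lemma rk_inj (T : finType) : injective (@rk T).
Proof. by move=> x y /val_inj/enum_rank_inj. Qed.

Definition lexgt (T : finType) (E F : {set T}) : bool :=
  [exists x, [&& x \in E, x \notin F &
     [forall y, (rk y < rk x) ==> ((y \in E) == (y \in F))]]].

Lemma lexgtP (T : finType) (E F : {set T}) :
  reflect (exists x, [/\ x \in E, x \notin F &
     forall y, rk y < rk x -> (y \in E) = (y \in F)]) (lexgt E F).
Proof.
apply: (iffP existsP) => [[x /and3P [xE xF /forallP H]]|[x [xE xF H]]].
  exists x; split => // y lt; by move/implyP: (H y) => /(_ lt) /eqP.
exists x; rewrite xE xF /=; apply/forallP => y; apply/implyP => lt.
by rewrite H.
Qed.

Lemma lexgt_irr (T : finType) (E : {set T}) : ~~ lexgt E E.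
Proof. by apply/negP => /lexgtP [x [xE xF _]]; rewrite xE in xF. Qed.

Lemma lexgt_trans (T : finType) (E F H : {set T}) :
  lexgt E F -> lexgt F H -> lexgt E H.
Proof.
move=> /lexgtP [x [xE xF Hx]] /lexgtP [y [yF yH Hy]].
apply/lexgtP.
have [lt|ge] := ltnP (rk x) (rk y).
  exists x; split => //; first by rewrite -(Hy _ lt).
  move=> z lz; rewrite Hx // Hy //; lia.
case: (ltngtP (rk y) (rk x)) => [lt|gt|e].
- exists y; split => //; first by rewrite (Hx _ lt).
  move=> z lz; rewrite Hx ?Hy //; lia.
- lia.
- by move: (rk_inj e) xF => <-; rewrite yF.
Qed.

Lemma lexgt_total (T : finType) (E F : {set T}) :
  E != F -> lexgt E F || lexgt F E.
Proof.
move=> neq.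
have [z zin] : exists z, (z \in E) != (z \in F).
  apply/existsP; apply: contraR neq; rewrite negb_exists => /forallP H.
  by apply/eqP/setP => z; move: (H z); rewrite negbK => /eqP.
pose P := [pred w : T | (w \in E) != (w \in F)].
case: (@arg_minnP _ z P (@rk T) zin) => w wP wmin.
have below : forall y, rk y < rk w -> (y \in E) = (y \in F).
  move=> y ly; apply/eqP; apply: contraTT ly => nP.
  by rewrite -leqNgt; apply: wmin.
move: wP; rewrite /P /=.
case wE: (w \in E); case wF: (w \in F) => //= _.
  by apply/orP; left; apply/lexgtP; exists w; rewrite wF; split.
by apply/orP; right; apply/lexgtP; exists w; rewrite wE; split => // y /below ->.
Qed.

Lemma incident_gt (T : finType) (a c d : T) (x : T) :
  rk a < rk c -> rk a < rk d -> lexgt [set a; x] [set c; d].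
Proof.
move=> ac ad; apply/lexgtP.
pose w := if rk x < rk a then x else a.
have wle : rk w <= rk a by rewrite /w; case: ifP => // /ltnW.
have wlx : rk w <= rk x by rewrite /w; case: ifP => //; rewrite ltnNge => /negbFE.
have notcd : forall y, rk y <= rk a -> y \notin [set c; d].
  move=> y ly; rewrite !inE; apply/negP => /orP [] /eqP e; subst; lia.
exists w; split.
- by rewrite /w !inE; case: ifP; rewrite eqxx ?orbT.
- exact: notcd.
- move=> y ly; rewrite (negbTE (notcd y _)); last lia.
  rewrite !inE; apply/negP => /orP [] /eqP e; subst; lia.
Qed.

Theorem lemma6p2 (T : finType) (adj : rel T) :
  simple_graph adj ->
  exists gt : rel {set T}, admissible_edge_ordering adj gt.
Proof.
move=> _; exists (@lexgt T); split.
  split; first by move=> E _; exact: lexgt_irr.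
  split; first by move=> E F H _ _ _; exact: lexgt_trans.
  by move=> E F _ _; exact: lexgt_total.
move=> a b c d _ _ disj /lexgtP [z [zin zout Hz]].
have nz : forall y, rk y < rk z -> y \notin [set c; d].
  move=> y ly; apply/negP => yin; move: (Hz _ ly); rewrite yin => yab.
  by move: yin; rewrite (disjointFr disj yab).
have gtz : forall y, y \in [set c; d] -> rk z < rk y.
  move=> y yin; case: (ltngtP (rk z) (rk y)) => // [lt|e].
    by move: (nz _ lt); rewrite yin.
  by move: (rk_inj e) zout => -> ; rewrite yin.
have zc := gtz c (set21 c d); have zd := gtz d (set22 c d).
move: zin; rewrite !inE => /orP [] /eqP zE; subst z.
  by left => x _; apply: incident_gt.
by right => x _; apply: incident_gt.
Qed.
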